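(* Let $G=(V,E)$ be a finite planar embedded graph, $\mathbf{p}$ a packing of $G$, $V=V^+\sqcup V^-\sqcup V^=\sqcup V^0$ a partition, and $\mathbf{p}'$ a proper infinitesimal flex of $\mathbf{p}$, with associated modified partition $V=\tilde V^+\sqcup\tilde V^-\sqcup\tilde V^=\sqcup\tilde V^0$. Suppose there exists an equilibrium stress $\omega$ on $(G,\mathbf{p})$ whose radial force sum $\omega_i=\sum_{j:(i,j)\in E}\omega_{ij}(r_i+r_j)$ is $\ge 0$ for $i\in\tilde V^-$, $\le 0$ for $i\in\tilde V^+$, $=0$ for $i\in\tilde V^0$, and such that $$\sum_{(i,j)\in E}\omega_{ij}\big[(\mathbf{p}_i'-\mathbf{p}_j')\cdot(\mathbf{p}_i'-\mathbf{p}_j')-(r_i'+r_j')^2\big]>0.$$ Then $\mathbf{p}'$ is not extendable.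
   Context: A packing of $G=(V,E)$, $V=\{1,\dots,n\}$, is $\mathbf{p}=(x_1,y_1,r_1,\dots,x_n,y_n,r_n)\in\mathbb{R}^{3n}$, all $r_i>0$, with $(r_i+r_j)^2=(x_i-x_j)^2+(y_i-y_j)^2$ for all $(i,j)\in E$ and the neighbors of each vertex in the same counterclockwise order as in the embedding; $\mathbf{p}_i=(x_i,y_i)$. The partition: $V^+$ (radius may increase or stay), $V^-$ (may decrease or stay), $V^=$ (fixed), $V^0$ (free). An infinitesimal flex is $\mathbf{p}'=(x_1',y_1',r_1',\dots)$ with $(\mathbf{p}_i-\mathbf{p}_j)\cdot(\mathbf{p}_i'-\mathbf{p}_j')=(r_i+r_j)(r_i'+r_j')$ for all edges; proper if $r_i'\ge 0$ on $V^+$, $\le 0$ on $V^-$, $=0$ on $V^=$. Given a proper $\mathbf{p}'$, the modified partition is obtained by moving every $i\in V^+$ with $r_i'>0$ and every $i\in V^-$ with $r_i'<0$ into $V^0$: $\tilde V^+=\{i\in V^+:r_i'=0\}$, $\tilde V^-=\{i\in V^-:r_i'=0\}$, $\tilde V^==V^=$, and $\tilde V^0$ the rest. $\mathbf{p}'$ is extendable if there is $\mathbf{p}''\in\mathbb{R}^{3n}$ with, for every $(i,j)\in E$, $(\mathbf{p}_i-\mathbf{p}_j)\cdot(\mathbf{p}_i''-\mathbf{p}_j'')-(r_i+r_j)(r_i''+r_j'')=(r_i'+r_j')^2-(\mathbf{p}_i'-\mathbf{p}_j')\cdot(\mathbf{p}_i'-\mathbf{p}_j')$, and $r_i''\ge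 0$ on $\tilde V^+$, $r_i''\le0$ on $\tilde V^-$, $r_i''=0$ on $\tilde V^=$. A stress is $\omega:E\to\mathbb{R}$; it is an equilibrium stress if $\sum_{j:(i,j)\in E}\omega_{ij}(\mathbf{p}_i-\mathbf{p}_j)=0$ for every $i$. *)

(* Defs.v *)
From mathcomp Require Import all_boot all_order all_algebra.
Set Implicit Arguments. Unset Strict Implicit. Unset Printing Implicit Defensive.
Import Order.TTheory GRing.Theory Num.Theory.
Local Open Scope ring_scope.

(* The embedding is given as a rotation system:
   rot i is the list of neighbours of i in counterclockwise order. *)

Definition simple_graph (n : nat) (E : rel 'I_n) : Prop :=
  (forall i, ~~ E i i) /\ (forall i j, E i j = E j i).

Definition rotation_system (n : nat) (E : rel 'I_n) (rot : 'I_n -> seq 'I_n)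
  : Prop := forall i, uniq (rot i) /\ (forall j, (j \in rot i) = E i j).

Section Geom.
Variable R : realFieldType.

Definition cross (u v : R * R) : R := u.1 * v.2 - u.2 * v.1.
Definition dot (u v : R * R) : R := u.1 * v.1 + u.2 * v.2.

(* [upper u v] : the counterclockwise angle from u to v lies in [0, pi). *)
Definition upper (u v : R * R) : bool :=
  (0 < cross u v) || ((cross u v == 0) && (0 < dot u v)).

(* [ang_lt u v w] : the ccw angle (in [0,2pi)) from u to v is strictly
   smaller than the ccw angle from u to w. *)
Definition ang_lt (u : R * R) (v w : R * R) : bool :=
  if upper u v != upper u w then upper u v else 0 < cross v w.

Definition ccw_ordered (s : seq (R * R)) : bool :=
  match s with
  | [::] => true
  | u :: t => path (ang_lt u) u t
  end.

End Geom.

Section Packing.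
Variables (R : realFieldType) (n : nat).
Implicit Types (x y r : 'I_n -> R).

Definition pt x y (i : 'I_n) : R * R := (x i, y i).
Definition vsub (a b : R * R) : R * R := (a.1 - b.1, a.2 - b.2).

Definition packing (E : rel 'I_n) (rot : 'I_n -> seq 'I_n) x y r : Prop :=
  (forall i, 0 < r i) /\
  (forall i j, E i j ->
     (r i + r j) ^+ 2 = (x i - x j) ^+ 2 + (y i - y j) ^+ 2) /\
  (forall i, ccw_ordered [seq vsub (pt x y j) (pt x y i) | j <- rot i]).

Inductive kind := KPlus | KMinus | KEq | KZero.

Definition inf_flex (E : rel 'I_n) x y r x' y' r' : Prop :=
  forall i j, E i j ->
    (x i - x j) * (x' i - x' j) + (y i - y j) * (y' i - y' j)
    = (r i + r j) * (r' i + r' j).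

Definition sign_ok (k : kind) (a : R) : Prop :=
  match k with
  | KPlus => 0 <= a
  | KMinus => a <= 0
  | KEq => a = 0
  | KZero => True
  end.

Definition force_ok (k : kind) (a : R) : Prop :=
  match k with
  | KMinus => 0 <= a
  | KPlus => a <= 0
  | KZero => a = 0
  | KEq => True
  end.

Definition proper_flex (E : rel 'I_n) (part : 'I_n -> kind) x y r x' y' r'
  : Prop := inf_flex E x y r x' y' r' /\ (forall i, sign_ok (part i) (r' i)).

Definition mod_part (part : 'I_n -> kind) (r' : 'I_n -> R) (i : 'I_n) : kind :=
  match part i with
  | KPlus => if r' i == 0 then KPlus else KZero
  | KMinus => if r' i == 0 then KMinus else KZero
  | k => k
  end.

Definition extendable (E : rel 'I_n) (part : 'I_n -> kind) x y r x' y' r'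
  : Prop :=
  exists x'' y'' r'' : 'I_n -> R,
    (forall i j, E i j ->
       (x i - x j) * (x'' i - x'' j) + (y i - y j) * (y'' i - y'' j)
       - (r i + r j) * (r'' i + r'' j)
       = (r' i + r' j) ^+ 2
         - ((x' i - x' j) ^+ 2 + (y' i - y' j) ^+ 2)) /\
    (forall i, sign_ok (mod_part part r' i) (r'' i)).

Definition stress (E : rel 'I_n) (w : 'I_n -> 'I_n -> R) : Prop :=
  forall i j, E i j -> w i j = w j i.

Definition equilibrium (E : rel 'I_n) (w : 'I_n -> 'I_n -> R) x y : Prop :=
  stress E w /\
  forall i, (\sum_(j | E i j) w i j * (x i - x j) = 0) /\
            (\sum_(j | E i j) w i j * (y i - y j) = 0).

Definition radial_force (E : rel 'I_n) (w : 'I_n -> 'I_n -> R) r i : R :=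
  \sum_(j | E i j) w i j * (r i + r j).

Definition edge_sum (E : rel 'I_n) (f : 'I_n -> 'I_n -> R) : R :=
  \sum_(i : 'I_n) \sum_(j : 'I_n | (i < j)%N && E i j) f i j.

End Packing.

(* Main.v *)
Require Import Defs.
From mathcomp Require Import all_boot all_order all_algebra.
From mathcomp Require Import ring lra.
Import Order.TTheory GRing.Theory Num.Theory.
Local Open Scope ring_scope.

Lemma dsum_split (R : realFieldType) (n : nat) (E : rel 'I_n) (h : 'I_n -> 'I_n -> R) :
  simple_graph E ->
  \sum_i \sum_(j | E i j) h i j = edge_sum E (fun i j => h i j + h j i).
Proof.
move=> [irr sym]; rewrite /edge_sum.
under [RHS]eq_bigr => i _ do rewrite big_split /=.
rewrite big_split /=.
have -> : \sum_(i : 'I_n) \sum_(j : 'I_n | (i < j)%N && E i j) h j i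
        = \sum_(i : 'I_n) \sum_(j : 'I_n | (j < i)%N && E i j) h i j.
  rewrite (exchange_big_dep predT) //=.
  apply: eq_bigr => i _; apply: eq_bigl => j; by rewrite sym.
rewrite -big_split /=; apply: eq_bigr => i _.

rewrite (bigID (fun j : 'I_n => (i < j)%N)) /=; congr (_ + _).
  by apply: eq_bigl => j; rewrite andbC.
apply: eq_bigl => j; rewrite -leqNgt.
case: (ltngtP j i) => H.
- by rewrite andbC.
- by rewrite andbC.
- have e : j = i by apply: val_inj.
  by rewrite e (negbTE (irr i)).
Qed.


Theorem mainTheorem7 (R : realFieldType) (n : nat) (E : rel 'I_n)
  (rot : 'I_n -> seq 'I_n) (x y r : 'I_n -> R) (part : 'I_n -> kind)
  (x' y' r' : 'I_n -> R) (w : 'I_n -> 'I_n -> R) :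
  simple_graph E ->
  rotation_system E rot ->
  packing E rot x y r ->
  proper_flex E part x y r x' y' r' ->
  equilibrium E w x y ->
  (forall i, force_ok (mod_part part r' i) (radial_force E w r i)) ->
  0 < edge_sum E (fun i j => w i j *
        ((x' i - x' j) ^+ 2 + (y' i - y' j) ^+ 2 - (r' i + r' j) ^+ 2)) ->
  ~ extendable E part x y r x' y' r'.

Proof.
move=> sg _ _ [_ _] [wsym eq] Hf Hpos [x'' [y'' [r'' [Hext Hsgn]]]].
pose h i j := w i j * ((x i - x j) * x'' i + (y i - y j) * y'' i - (r i + r j) * r'' i).
have S1 : \sum_i \sum_(j | E i j) h i j = - \sum_i r'' i * radial_force E w r i.
  rewrite -sumrN; apply: eq_bigr => i _.
  have [ex ey] := eq i.
  have -> : \sum_(j | E i j) h i j =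
     x'' i * (\sum_(j | E i j) w i j * (x i - x j)) +
     y'' i * (\sum_(j | E i j) w i j * (y i - y j)) -
     r'' i * radial_force E w r i.
    rewrite /radial_force !mulr_sumr -big_split -sumrB /=.
    by apply: eq_bigr => j _; rewrite /h; ring.
  by rewrite ex ey !mulr0 !add0r.
have S2 : \sum_i \sum_(j | E i j) h i j = - edge_sum E (fun i j => w i j *
        ((x' i - x' j) ^+ 2 + (y' i - y' j) ^+ 2 - (r' i + r' j) ^+ 2)).
  rewrite dsum_split // /edge_sum -sumrN; apply: eq_bigr => i _.
  rewrite -sumrN; apply: eq_bigr => j /andP [_ Eij].
  have Ew := wsym i j Eij.
  have He := Hext i j Eij.
  rewrite /h -Ew.
  have -> : w i j * ((x i - x j) * x'' i + (y i - y j) * y'' i - (r i + r j) * r'' i) +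
     w i j * ((x j - x i) * x'' j + (y j - y i) * y'' j - (r j + r i) * r'' j)
     = w i j * ((x i - x j) * (x'' i - x'' j) + (y i - y j) * (y'' i - y'' j)
       - (r i + r j) * (r'' i + r'' j)) by ring.
  rewrite He; ring.
have S3 : \sum_i r'' i * radial_force E w r i <= 0.
  apply: sumr_le0 => i _.
  have := Hf i; have := Hsgn i.
  case: (mod_part part r' i) => /= a b.
  - by rewrite mulrC; apply: mulr_le0_ge0.
  - by rewrite mulrC; apply: mulr_ge0_le0.
  - by rewrite a mul0r.
  - by rewrite b mulr0.
have : 0 <= - \sum_i r'' i * radial_force E w r i by rewrite oppr_ge0.
rewrite -S1 S2 oppr_ge0 => H.
by move: (lt_le_trans Hpos H); rewrite ltxx.
Qed.
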